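(* Let $\mathbb{X}$ be a finite set, $\mathcal{H}_A$ a finite-dimensional Hilbert space, and $\{\rho_A^x\}_{x\in\mathbb{X}}$ density operators on $\mathcal{H}_A$. Then the barycentric quantum Rényi leakage satisfies $\mathcal{B}(X\rightarrow A)_{\rho_A}=\log(\mu^\star)$, where $\mu^\star$ is the optimal value of the optimization problem \[ \min_{\pi\in\Delta(\mathbb{X}),\,\mu\in\mathbb{R}}\ \mu\quad\text{subject to}\quad \rho_A^x\leq\mu\sum_{x'\in\mathbb{X}}\pi(x')\rho_A^{x'}\ \ \text{for all }x\in\mathbb{X} \] (operator inequalities).
   Context: All logarithms are base 2. $\Delta(\mathbb{X})$ is the set of probability mass functions on $\mathbb{X}$. For a density operator $\rho$ and positive semi-definite $\sigma$, $\widetilde{D}_\infty(\rho\|\sigma)=\log\big(\inf\{\mu\in\mathbb{R}:\rho\leq\mu\sigma\}\big)$ ($+\infty$ if the support of $\rho$ is not contained in that of $\sigma$). The barycentric quantum Rényi leakage is $\mathcal{B}(X\rightarrow A)_{\rho_A}=\min_{\pi\in\Delta(\mathbb{X})}\max_{x\in\mathbb{X}}\widetilde{D}_\infty\big(\rho_A^x\,\|\,\sum_{x'}\pi(x')\rho_A^{x'}\big)$. *)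

(* Defs.v *)
From HB Require Import structures.
From mathcomp Require Import all_boot all_order all_algebra.
From mathcomp Require Import all_classical all_reals all_analysis.
From mathcomp Require Import complex.

Set Implicit Arguments.
Unset Strict Implicit.
Unset Printing Implicit Defensive.

Import Order.TTheory GRing.Theory Num.Theory.
Local Open Scope ring_scope.
Local Open Scope classical_set_scope.

Section Quantum.
Variable R : realType.
Local Notation C := (R[i]).

Definition log2 (x : R) : R := ln x / ln 2.

Definition adj {m n} (A : 'M[C]_(m, n)) : 'M[C]_(n, m) := (map_mx conjc A)^T.

(* positive semi-definite: Hermitian and <v, A v> >= 0 for all v
   (the order on C = R[i] is: x <= y iff y - x is real and nonnegative) *)
Definition psdmx {d} (A : 'M[C]_d) : Prop :=
  adj A = A /\ forall v : 'cV[C]_d, 0 <= (adj v *m A *m v) 0 0.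

Definition loewner {d} (A B : 'M[C]_d) : Prop := psdmx (B - A).

Definition density {d} (rho : 'M[C]_d) : Prop := psdmx rho /\ \tr rho = 1.

(* support (range = column space) of rho contained in that of sigma *)
Definition supp_sub {d} (rho sigma : 'M[C]_d) : bool := (rho^T <= sigma^T)%MS.

Definition Dmax {d} (rho sigma : 'M[C]_d) : \bar R :=
  if supp_sub rho sigma
  then (log2 (inf [set mu : R | loewner rho ((mu%:C)%C *: sigma)]))%:E
  else +oo%E.

Definition pmfs (X : finType) : set (X -> R) :=
  [set pi | (forall x, 0 <= pi x) /\ \sum_(x : X) pi x = 1].

Definition mixture {X : finType} {d} (pi : X -> R) (rho : X -> 'M[C]_d) : 'M[C]_d :=
  \sum_(x : X) ((pi x)%:C)%C *: rho x.

Definition barycentric_leakage {X : finType} {d} (rho : X -> 'M[C]_d) : \bar R :=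
  ereal_inf [set (\big[maxe/-oo%E]_(x : X) Dmax (rho x) (mixture pi rho))
            | pi in @pmfs X].

Definition sdp_value {X : finType} {d} (rho : X -> 'M[C]_d) : R :=
  inf [set mu : R | exists2 pi, @pmfs X pi &
         forall x, loewner (rho x) ((mu%:C)%C *: mixture pi rho)].

End Quantum.

(* Main.v *)
Require Import Defs.
From HB Require Import structures.
From mathcomp Require Import all_boot all_order all_algebra.
From mathcomp Require Import all_classical all_reals all_analysis.
From mathcomp Require Import complex.
From mathcomp Require Import spectral sesquilinear.
From mathcomp Require Import ring.
Set Implicit Arguments.
Unset Strict Implicit.
Unset Printing Implicit Defensive.
Import Order.TTheory GRing.Theory Num.Theory.
Local Open Scope ring_scope.
Local Open Scope classical_set_scope.

Section LA.
Variable R : realType.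
Local Notation C := (R[i]).

Definition qf {n} (A : 'M[C]_n) (v : 'cV[C]_n) : C := (adj v *m A *m v) 0 0.
Definition bf {n} (A : 'M[C]_n) (u v : 'cV[C]_n) : C := (adj u *m A *m v) 0 0.

Lemma adjE m n (A : 'M[C]_(m, n)) i j : adj A i j = (A j i)^*.
Proof. by rewrite /adj !mxE. Qed.

Lemma adjK m n (A : 'M[C]_(m, n)) : adj (adj A) = A.
Proof. by apply/matrixP => i j; rewrite !adjE conjCK. Qed.

Lemma adjD m n (A B : 'M[C]_(m, n)) : adj (A + B) = adj A + adj B.
Proof. by apply/matrixP => i j; rewrite !adjE !mxE rmorphD. Qed.

Lemma adjN m n (A : 'M[C]_(m, n)) : adj (- A) = - adj A.
Proof. by apply/matrixP => i j; rewrite !adjE !mxE rmorphN. Qed.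

Lemma adjB m n (A B : 'M[C]_(m, n)) : adj (A - B) = adj A - adj B.
Proof. by rewrite adjD adjN. Qed.

Lemma adjZ m n c (A : 'M[C]_(m, n)) : adj (c *: A) = c^* *: adj A.
Proof. by apply/matrixP => i j; rewrite !adjE !mxE rmorphM. Qed.

Lemma adjM m n p (A : 'M[C]_(m, n)) (B : 'M[C]_(n, p)) :
  adj (A *m B) = adj B *m adj A.
Proof. by rewrite /adj map_mxM trmx_mul. Qed.

Lemma adj_sum (I : finType) m n (F : I -> 'M[C]_(m, n)) :
  adj (\sum_i F i) = \sum_i adj (F i).
Proof.
apply/matrixP => i j; rewrite adjE !summxE rmorph_sum.
by apply: eq_bigr => k _; rewrite adjE.
Qed.

Lemma conj_realC (a : R) : (a%:C)%C^* = (a%:C)%C.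
Proof. exact: conjc_real. Qed.

Lemma qfD n (A B : 'M[C]_n) v : qf (A + B) v = qf A v + qf B v.
Proof. by rewrite /qf mulmxDr mulmxDl mxE. Qed.

Lemma qfZ n c (A : 'M[C]_n) v : qf (c *: A) v = c * qf A v.
Proof. by rewrite /qf -scalemxAr -scalemxAl mxE. Qed.

Lemma qfN n (A : 'M[C]_n) v : qf (- A) v = - qf A v.
Proof. by rewrite -scaleN1r qfZ mulN1r. Qed.

Lemma qfB n (A B : 'M[C]_n) v : qf (A - B) v = qf A v - qf B v.
Proof. by rewrite qfD qfN. Qed.

Lemma qf_sum (I : finType) n (F : I -> 'M[C]_n) v :
  qf (\sum_i F i) v = \sum_i qf (F i) v.
Proof.
rewrite /qf mulmx_sumr mulmx_suml summxE.
by apply: eq_bigr => i _.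
Qed.

Lemma qf_conj n m (P : 'M[C]_(m, n)) (A : 'M[C]_n) w :
  qf (P *m A *m adj P) w = qf A (adj P *m w).
Proof. by rewrite /qf adjM adjK !mulmxA. Qed.

Lemma qf_delta n (A : 'M[C]_n) i : qf A (delta_mx i 0) = A i i.
Proof.
rewrite /qf; have -> : adj (delta_mx i 0 : 'cV[C]_n) = delta_mx 0 i.
  apply/matrixP => a b; rewrite adjE !mxE.
  by case: (_ == _); case: (_ == _) => /=; rewrite ?conjC0 ?conjC1.
by rewrite -rowE -colE !mxE.
Qed.

Lemma psdD n (A B : 'M[C]_n) : psdmx A -> psdmx B -> psdmx (A + B).
Proof.
move=> [hA pA] [hB pB]; split; first by rewrite adjD hA hB.
by move=> v; have := qfD A B v; rewrite /qf => ->; apply: addr_ge0.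
Qed.

Lemma psdZ n (a : R) (A : 'M[C]_n) : 0 <= a -> psdmx A -> psdmx ((a%:C)%C *: A).
Proof.
move=> a0 [hA pA]; split; first by rewrite adjZ conj_realC hA.
move=> v; have := qfZ (a%:C)%C A v; rewrite /qf => ->.
by apply: mulr_ge0 => //; rewrite ler0c.
Qed.

Lemma psd0 n : psdmx (0 : 'M[C]_n).
Proof.
split; first by apply/matrixP => i j; rewrite adjE !mxE conjC0.
by move=> v; rewrite mulmx0 mul0mx mxE.
Qed.

Lemma psd_sum (I : finType) n (P : pred I) (F : I -> 'M[C]_n) :
  (forall i, P i -> psdmx (F i)) -> psdmx (\sum_(i | P i) F i).
Proof.
move=> h; apply: big_ind; [exact: psd0 | exact: psdD | exact: h].
Qed.

Lemma psd_tr n (A : 'M[C]_n) : psdmx A -> 0 <= \tr A.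
Proof.
move=> [_ pA]; rewrite /mxtrace; apply: sumr_ge0 => i _.
by have := pA (delta_mx i 0); rewrite -/(qf A _) qf_delta.
Qed.


Lemma bf_delta n (A : 'M[C]_n) a b :
  (adj (delta_mx a 0 : 'cV[C]_n) *m A *m (delta_mx b 0 : 'cV[C]_n)) 0 0 = A a b.
Proof.
have -> : adj (delta_mx a 0 : 'cV[C]_n) = (delta_mx 0 a : 'rV[C]_n).
  apply/matrixP => u v; rewrite adjE !mxE.
  by case: (_ == _); case: (_ == _) => /=; rewrite ?conjC0 ?conjC1.
by rewrite -rowE -colE !mxE.
Qed.

Lemma qf_expand n (A : 'M[C]_n) w :
  qf A w = \sum_i \sum_j (w i 0)^* * A i j * w j 0.
Proof.
rewrite /qf mxE (eq_bigr (fun j => \sum_i (w i 0)^* * A i j * w j 0)).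
  by rewrite exchange_big.
by move=> j _; rewrite mxE mulr_suml; apply: eq_bigr => i _; rewrite adjE.
Qed.

Lemma qf_diag n (s : 'rV[C]_n) w :
  qf (diag_mx s) w = \sum_i s 0 i * `|w i 0| ^+ 2.
Proof.
rewrite /qf mul_mx_diag mxE; apply: eq_bigr => i _.
rewrite !mxE normCK. ring.
Qed.

Lemma qf_2 n (A : 'M[C]_n) x i j :
  qf A (x *: delta_mx i 0 + delta_mx j 0) =
  x^* * x * A i i + x^* * A i j + x * A j i + A j j.
Proof.
have E : forall (M N : 'M[C]_1), (M + N) 0 0 = M 0 0 + N 0 0.
  by move=> M N; rewrite mxE.
have ES : forall c (M : 'M[C]_1), (c *: M) 0 0 = c * M 0 0.
  by move=> c M; rewrite mxE.
rewrite /qf adjD adjZ !mulmxDl !mulmxDr -!scalemxAl -!scalemxAr.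
rewrite !E !ES !bf_delta; ring.
Qed.

Lemma psd_herm n (A : 'M[C]_n) i j : psdmx A -> A j i = (A i j)^*.
Proof. by move=> [hA _]; rewrite -{1}hA adjE. Qed.

Lemma psd_diag_ge0 n (A : 'M[C]_n) i : psdmx A -> 0 <= A i i.
Proof. by move=> [_ pA]; have := pA (delta_mx i 0); rewrite -/(qf A _) qf_delta. Qed.

Lemma psd_zero_row n (A : 'M[C]_n) i j : psdmx A -> A i i = 0 -> A i j = 0.
Proof.
move=> pA Aii; apply/eqP; apply/negPn/negP => a0.
have ac0 : (A i j)^* != 0 by rewrite conjC_eq0.
have Ajj0 := psd_diag_ge0 j pA.
have Ajjc : (A j j)^* = A j j by apply/CrealP; exact: ger0_real.
set x := - (A j j + 1) / (A i j)^*.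
have := pA.2 (x *: delta_mx i 0 + delta_mx j 0).
rewrite -/(qf A _) qf_2 Aii (psd_herm i j pA).
have xc : x^* = - (A j j + 1) / A i j.
  by rewrite /x rmorphM rmorphN rmorphD rmorph1 fmorphV /= Ajjc conjCK.
have -> : x^* * x * 0 + x^* * A i j + x * (A i j)^* + A j j = - (A j j + 2).
  rewrite xc /x; field; by rewrite a0 ac0.
rewrite oppr_ge0 => h.
have : 0 < A j j + 2 by apply: ltr_wpDl.
by move=> /lt_le_trans/(_ h); rewrite ltxx.
Qed.

Lemma adj_tC m n (M : 'M[C]_(m, n)) : (M ^t* )%sesqui = adj M.
Proof. by rewrite /adj map_trmx. Qed.

Lemma spec_psd n (S : 'M[C]_n) : psdmx S ->
  exists (P : 'M[C]_n) (s : 'rV[C]_n),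
  [/\ P *m adj P = 1%:M, adj P *m P = 1%:M, S = adj P *m diag_mx s *m P
    & forall i, 0 <= s 0 i].
Proof.
move=> pS; have hS := pS.1.
have hn : S \is normalmx by apply/normalmxP; rewrite adj_tC hS.
have eS := orthomx_spectralP hn.
have U := spectral_unitarymx S.
have PP : spectralmx S *m adj (spectralmx S) = 1%:M by rewrite -adj_tC; apply/unitarymxP.
have iP : invmx (spectralmx S) = adj (spectralmx S) by rewrite invmx_unitary // adj_tC.
have PP' : adj (spectralmx S) *m spectralmx S = 1%:M by rewrite -iP mulVmx // spectral_unit.
exists (spectralmx S), (spectral_diag S); split => //; first by rewrite -iP.
move=> i.
set P := spectralmx S; set s := spectral_diag S.
have eD : diag_mx s = P *m S *m adj P.
  rewrite {1}eS iP -/P -/s !mulmxA PP mul1mx -mulmxA PP mulmx1 //.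
have -> : s 0 i = diag_mx s i i by rewrite mxE eqxx mulr1n.
rewrite eD -qf_delta qf_conj; exact: pS.2.
Qed.

Lemma am_gm (a b : C) : 0 <= a -> 0 <= b -> a * b <= a ^+ 2 + b ^+ 2.
Proof.
move=> a0 b0; case/orP: (real_leVge (ger0_real a0) (ger0_real b0)) => h.
  apply: (@le_trans _ _ (b ^+ 2)); first by rewrite expr2 ler_wpM2r.
  by apply: ler_wpDl => //; exact: exprn_ge0.
apply: (@le_trans _ _ (a ^+ 2)); first by rewrite expr2 ler_wpM2l.
by apply: ler_wpDr => //; exact: exprn_ge0.
Qed.

Lemma qf_bound n (A : 'M[C]_n) (s : 'rV[C]_n) w :
  (forall i, 0 <= s 0 i) ->
  (forall i j, A i j != 0 -> s 0 i != 0 /\ s 0 j != 0) ->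
  0 <= qf A w ->
  qf A w <= (\sum_i \sum_j `|A i j| * ((s 0 i)^-1 + (s 0 j)^-1)) * qf (diag_mx s) w.
Proof.
move=> s0 hz q0.
set Q := qf (diag_mx s) w.
have hQ : forall i, s 0 i != 0 -> `|w i 0| ^+ 2 <= (s 0 i)^-1 * Q.
  move=> i si.
  have h : s 0 i * `|w i 0| ^+ 2 <= Q.
    rewrite /Q qf_diag (bigD1 i) //= lerDl; apply: sumr_ge0 => k _.
    by apply: mulr_ge0 => //; apply: exprn_ge0.
  rewrite -[X in X <= _](mulKf si); apply: ler_wpM2l => //.
  by rewrite invr_ge0.
rewrite -[qf A w]ger0_norm // qf_expand.
apply: le_trans (ler_norm_sum _ _ _) _.
rewrite mulr_suml; apply: ler_sum => i _.
apply: le_trans (ler_norm_sum _ _ _) _.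
rewrite mulr_suml; apply: ler_sum => j _.
rewrite !normrM norm_conjC.
case: (eqVneq (A i j) 0) => [->|aij]; first by rewrite normr0 !(mulr0, mul0r).
have [si sj] := hz _ _ aij.
rewrite [`|w i 0| * _]mulrC -!mulrA; apply: ler_wpM2l => //.
apply: le_trans (am_gm (normr_ge0 _) (normr_ge0 _)) _.
by rewrite mulrDl; apply: lerD; apply: hQ.
Qed.

Lemma psd_conj n (P A : 'M[C]_n) : psdmx A -> psdmx (P *m A *m adj P).
Proof.
move=> pA; split; first by rewrite !adjM adjK pA.1 mulmxA.
by move=> w; rewrite -/(qf _ _) qf_conj; exact: pA.2.
Qed.

Lemma diag_fact n (A : 'M[C]_n) (s : 'rV[C]_n) :
  (forall i j, s 0 i = 0 -> A i j = 0) ->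
  A = diag_mx s *m (diag_mx (\row_k (s 0 k)^-1) *m A).
Proof.
move=> z; rewrite !mul_diag_mx; apply/matrixP => i j; rewrite !mxE.
case: (eqVneq (s 0 i) 0) => [si|si]; first by rewrite si mul0r z.
by rewrite mulrA mulfV // mul1r.
Qed.

Lemma conj_split n (P Q D Y : 'M[C]_n) : P *m Q = 1%:M ->
  Q *m (D *m Y) *m P = Q *m D *m P *m (Q *m Y *m P).
Proof. by move=> h; rewrite !mulmxA -(mulmxA _ P Q) h mulmx1. Qed.

Lemma loewner_supp n (rho S : 'M[C]_n) (mu : R) : psdmx rho -> psdmx S ->
  loewner rho ((mu%:C)%C *: S) -> supp_sub rho S.
Proof.
move=> pr pS hL.
have [P [s [PP PP' eS s0]]] := spec_psd pS.
set D := diag_mx s.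
set r' := P *m rho *m adj P.
have pr' : psdmx r' by exact: psd_conj.
have eSD : P *m S *m adj P = D.
  by rewrite eS !mulmxA PP mul1mx -mulmxA PP mulmx1.
have hle : forall w, qf r' w <= (mu%:C)%C * qf D w.
  move=> w; rewrite /r' qf_conj -eSD qf_conj.
  by have := hL.2 (adj P *m w); rewrite -/(qf _ _) qfB qfZ subr_ge0.
have z : forall i j, s 0 i = 0 -> r' i j = 0.
  move=> i j si; apply: (psd_zero_row j (pr')); apply/eqP.
  rewrite eq_le (psd_diag_ge0 i pr') andbT.
  by have := hle (delta_mx i 0); rewrite !qf_delta /D [diag_mx s i i]mxE eqxx mulr1n si mulr0.
pose sinv := \row_k (s 0 k)^-1.
have er' : r' = D *m (diag_mx sinv *m r') by exact: diag_fact.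
have eρ : rho = S *m (adj P *m (diag_mx sinv *m r') *m P).
  have -> : rho = adj P *m r' *m P by rewrite /r' !mulmxA PP' mul1mx -mulmxA PP' mulmx1.
  by rewrite {1}er' eS; clearbody r'; apply: conj_split.
rewrite /supp_sub; apply/submxP; exists (adj P *m (diag_mx sinv *m r') *m P)^T.
by rewrite {1}eρ trmx_mul.
Qed.

Lemma supp_loewner n (rho S : 'M[C]_n) : psdmx rho -> psdmx S ->
  supp_sub rho S -> exists mu : R, loewner rho ((mu%:C)%C *: S).
Proof.
move=> pr pS /submxP [B eB].
have [P [s [PP PP' eS s0]]] := spec_psd pS.
set D := diag_mx s.
set r' := P *m rho *m adj P.
have pr' : psdmx r' by exact: psd_conj.
have eSD : P *m S *m adj P = D.
  by rewrite eS !mulmxA PP mul1mx -mulmxA PP mulmx1.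
have eρ : rho = S *m B^T by rewrite -[rho]trmxK eB trmx_mul trmxK.
have eK : r' = D *m (P *m B^T *m adj P).
  by rewrite /r' eρ -eSD !mulmxA -(mulmxA _ (adj P) P) PP' mulmx1.
have z : forall i j, s 0 i = 0 -> r' i j = 0.
  by move=> i j si; rewrite eK mul_diag_mx mxE si mul0r.
have z' : forall i j, s 0 j = 0 -> r' i j = 0.
  by move=> i j sj; rewrite (psd_herm j i pr') z // conjC0.
set muC := \sum_i \sum_j `|r' i j| * ((s 0 i)^-1 + (s 0 j)^-1).
have muC0 : 0 <= muC.
  apply: sumr_ge0 => i _; apply: sumr_ge0 => j _; apply: mulr_ge0 => //.
  by apply: addr_ge0; rewrite invr_ge0.
have [mu emu] : exists mu : R, muC = (mu%:C)%C.
  by apply/complex_realP; exact: ger0_real.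
exists mu; split; first by rewrite adjB adjZ conj_realC pS.1 pr.1.
move=> v; rewrite -/(qf _ _) qfB qfZ subr_ge0 -emu.
have -> : v = adj P *m (P *m v) by rewrite mulmxA PP' mul1mx.
rewrite -!qf_conj eSD -/r'; apply: qf_bound => //; last exact: pr'.2.
move=> i j aij; split; apply/eqP => h; move/eqP: aij; apply.
  exact: z.
exact: z'.
Qed.

End LA.


Section Abs.
Variable R : realType.
Variable X : finType.

Lemma log2_le (a b : R) : 0 < a -> a <= b -> log2 a <= log2 b.
Proof.
move=> a0 ab; rewrite /log2; apply: ler_wpM2r.
  by rewrite invr_ge0 ln_ge0 // ler1n.
by rewrite ler_ln ?posrE // (lt_le_trans a0 ab).
Qed.

Lemma log2_inf (T : set R) (r : R) : T !=set0 -> (forall mu, T mu -> 1 <= mu) ->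
  (forall mu, T mu -> r <= log2 mu) -> r <= log2 (inf T).
Proof.
move=> ne h1 hr.
have l2 : 0 < ln (2 : R) by apply: ln_gt0; rewrite ltr1n.
have hinf : 1 <= inf T by exact: (lb_le_inf ne h1).
have hpos : 0 < inf T by apply: lt_le_trans hinf.
have he : expR (r * ln 2) <= inf T.
  apply: (lb_le_inf ne) => mu Tm.
  have := hr _ Tm; rewrite /log2 ler_pdivlMr // => h.
  have mpos : 0 < mu by apply: lt_le_trans (h1 _ Tm).
  by rewrite -(lnK (x:=mu)) ?posrE // ler_expR.
rewrite /log2 ler_pdivlMr // -(expRK (r * ln 2)) ler_ln ?posrE ?expR_gt0 //.
Qed.


Lemma abstract_main (P : (X -> R) -> Prop) (M : (X -> R) -> X -> set R)
  (supp : (X -> R) -> X -> bool) (x0 : X) :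
  (forall pi x mu mu', P pi -> mu <= mu' -> M pi x mu -> M pi x mu') ->
  (forall pi x mu, P pi -> M pi x mu -> 1 <= mu) ->
  (forall pi x, P pi -> supp pi x -> M pi x !=set0) ->
  (forall pi x mu, P pi -> M pi x mu -> supp pi x) ->
  (exists pi mu, P pi /\ forall x, M pi x mu) ->
  ereal_inf [set \big[maxe/-oo%E]_x
      (if supp pi x then ((log2 (inf (M pi x)))%:E)%E else +oo%E) | pi in P] =
  ((log2 (inf [set mu | exists2 pi, P pi & forall x, M pi x mu]))%:E)%E.
Proof.
move=> up ge1 ne sup [piw [muw [Pw Mw]]].
set T := [set mu | _].
set S := [set _ | _ in _].
have Tne : T !=set0 by exists muw; exists piw.
have T1 : forall mu, T mu -> 1 <= mu.
  by move=> mu [pi hp /(_ x0)]; exact: ge1.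
have hlbT : has_lbound T by exists 1 => mu /T1.
have minf : 1 <= inf T by exact: (lb_le_inf Tne T1).
have A : forall pi, P pi -> ((log2 (inf T))%:E <= \big[maxe/-oo%E]_x
      (if supp pi x then ((log2 (inf (M pi x)))%:E)%E else +oo%E))%E.
  move=> pi hp.
  case: (pselect (forall x, supp pi x)) => [hall|]; last first.
    move=> /existsNP [x hx].
    have hf : supp pi x = false by apply/negP.
    apply: le_trans (leey _) _.
    apply: le_trans _ (le_bigmax _ _ x).
    by rewrite hf.
  have Mne : forall x, M pi x !=set0 by move=> x; exact: ne.
  have M1 : forall x, lbound (M pi x) 1 by move=> x mu; exact: ge1.
  have hinfM : forall x, has_inf (M pi x).
    by move=> x; split; [exact: Mne | exists 1; exact: M1].
  have g0 : forall i, (0:R) <= inf (M pi i).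
    move=> i; apply: (@le_trans _ _ 1) => //.
    exact: (lb_le_inf (Mne i) (M1 i)).
  have [x1 _ ex1] := eq_bigmax (x := (0:R)) x0 xpredT (fun i => inf (M pi i)) isT
     (fun i _ => g0 i).
  have gmax : forall x, inf (M pi x) <= inf (M pi x1).
    by move=> x; rewrite -ex1; exact: (le_bigmax_cond (0:R) (P := xpredT) (fun i => inf (M pi i)) isT).
  have Tle : inf T <= inf (M pi x1).
    apply/ler_addgt0Pr => e e0.
    apply: (ge_inf hlbT); exists pi => // x.
    have [m Mm mlt] := inf_adherent e0 (hinfM x).
    apply: (up pi x m _ hp _ Mm).
    by rewrite (le_trans (ltW mlt)) // lerD2r gmax.
  apply: le_trans _ (le_bigmax _ _ x1).
  rewrite hall lee_fin; apply: log2_le => //.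
  exact: lt_le_trans ltr01 minf.
have B : forall mu, T mu -> (ereal_inf S <= (log2 mu)%:E)%E.
  move=> mu [pi hp hL].
  apply: le_trans (ereal_inf_lbound (_ : S _)) _; first by exists pi.
  apply: bigmax_le => [|x _]; first exact: leNye.
  rewrite (sup _ _ _ hp (hL x)) lee_fin.
  have nx : M pi x !=set0 by exists mu; exact: hL.
  have M1 : lbound (M pi x) 1 by move=> m; exact: ge1.
  apply: log2_le.
    exact: lt_le_trans ltr01 (lb_le_inf nx M1).
  by apply: (ge_inf _ (hL x)); exists 1.
have lo : ((log2 (inf T))%:E <= ereal_inf S)%E.
  by apply/ereal_infP => _ [pi hp <-]; exact: A.
apply/le_anti; rewrite lo andbT.
case E: (ereal_inf S) => [r| |].
- rewrite lee_fin; apply: log2_inf => // mu Tm.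
  by have := B _ Tm; rewrite E lee_fin.
- by have [mu Tm] := Tne; have := B _ Tm; rewrite E.
- exact: leNye.
Qed.

End Abs.

Section Main.
Variable R : realType.
Variable X : finType.
Variable d : nat.
Variable rho : X -> 'M[R[i]]_d.
Hypothesis hX : (0 < #|X|)%N.
Hypothesis hrho : forall x, density (rho x).

Local Notation C := (R[i]).

Lemma mix_psd pi : pmfs pi -> psdmx (mixture pi rho).
Proof.
move=> [p0 _]; apply: psd_sum => x _; apply: psdZ => //; exact: (hrho x).1.
Qed.

Lemma tr_mix pi : pmfs pi -> \tr (mixture pi rho) = 1.
Proof.
move=> [_ p1]; rewrite /mixture raddf_sum.
rewrite (eq_bigr (fun x => ((pi x)%:C)%C)); last first.
  by move=> x _; rewrite /= mxtraceZ (hrho x).2 mulr1.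
by rewrite -rmorph_sum p1.
Qed.

Lemma loew_ge1 pi x (mu : R) : pmfs pi ->
  loewner (rho x) ((mu%:C)%C *: mixture pi rho) -> 1 <= mu.
Proof.
move=> hp hL; have := psd_tr hL; rewrite raddfB /= mxtraceZ tr_mix //.
by rewrite (hrho x).2 mulr1 -(rmorph1 (real_complex R)) -rmorphB ler0c subr_ge0.
Qed.
Lemma loew_up pi x (mu mu' : R) : pmfs pi -> mu <= mu' ->
  loewner (rho x) ((mu%:C)%C *: mixture pi rho) ->
  loewner (rho x) ((mu'%:C)%C *: mixture pi rho).
Proof.
move=> hp le hL; rewrite /loewner.
have -> : (mu'%:C)%C *: mixture pi rho - rho x =
   ((mu%:C)%C *: mixture pi rho - rho x) + ((mu' - mu)%:C)%C *: mixture pi rho.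
  by rewrite rmorphB /= scalerBl [RHS]addrC addrA subrK.
apply: psdD; first exact: hL.
by apply: psdZ; [rewrite subr_ge0 | exact: mix_psd].
Qed.

Definition unif : X -> R := fun _ => (#|X|%:R)^-1.

Lemma unif_pmf : pmfs unif.
Proof.
have n0 : (#|X|%:R : R) != 0 by rewrite pnatr_eq0 -lt0n.
split; first by move=> x; rewrite /unif invr_ge0.
by rewrite /unif sumr_const -[#|xpredT|]/#|X| -(mulr_natr (#|X|%:R)^-1) mulVf.
Qed.

Lemma unif_loew x : loewner (rho x) (((#|X|%:R : R)%:C)%C *: mixture unif rho).
Proof.
have n0 : (#|X|%:R : R) != 0 by rewrite pnatr_eq0 -lt0n.
have -> : ((#|X|%:R : R)%:C)%C *: mixture unif rho = \sum_y rho y.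
  rewrite /mixture scaler_sumr; apply: eq_bigr => y _.
  by rewrite scalerA -rmorphM /= /unif mulfV // rmorph1 scale1r.
rewrite /loewner (bigD1 x) //= addrC addrK.
by apply: psd_sum => y _; exact: (hrho y).1.
Qed.

Lemma mainB : barycentric_leakage rho = ((log2 (sdp_value rho))%:E)%E.
Proof.
have [x0 _] : exists x0 : X, x0 \in X by apply/card_gt0P.
rewrite /barycentric_leakage /sdp_value /Dmax.
apply: (abstract_main (P := @pmfs R X)
  (M := fun pi x => [set mu : R | loewner (rho x) ((mu%:C)%C *: mixture pi rho)])
  (supp := fun pi x => supp_sub (rho x) (mixture pi rho)) x0).
- by move=> pi x mu mu' hp le; apply: loew_up.
- by move=> pi x mu hp; apply: loew_ge1.
- by move=> pi x hp hs; apply: supp_loewner; [exact: (hrho x).1 | exact: mix_psd | exact: hs].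
- by move=> pi x mu hp /= hL; exact: (loewner_supp (hrho x).1 (mix_psd hp) hL).
- by exists unif, (#|X|%:R); split; [exact: unif_pmf | exact: unif_loew].
Qed.

End Main.

Theorem proposition2 (R : realType) (X : finType) (d : nat)
    (rho : X -> 'M[R[i]]_d) :
  (0 < #|X|)%N ->
  (forall x, density (rho x)) ->
  barycentric_leakage rho = ((log2 (sdp_value rho))%:E)%E.
Proof.
move=> hX hrho; exact: (mainB hX hrho).
Qed.
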